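(* Let $0<q<1$ and let $a,b\in\mathbb{C}\setminus\{0\}$ be generic (such that all normalizing factors below are finite and nonzero, e.g. $a^2b^2\notin\{q^{-j}:j\in\mathbb{Z}_{\ge0}\}$). For the monic Askey-Wilson polynomials $P_n(z;a,b,c,d\,|\,q)$ one has, as Laurent polynomials in $z$, for all $n\ge0$: $$P_{2n}(z;a,b,-a,-b\,|\,q)=P_n(z^2;a^2,b^2,-1,-q\,|\,q^2),\qquad P_{2n+1}(z;a,b,-a,-b\,|\,q)=(z+z^{-1})\,P_n(z^2;a^2,b^2,-q,-q^2\,|\,q^2).$$
   Context: $(x;q)_k=\prod_{j=0}^{k-1}(1-xq^j)$, $(x_1,\dots,x_r;q)_k=\prod_i(x_i;q)_k$. The monic Askey-Wilson polynomial is $P_n(z;a,b,c,d\,|\,q)=\frac{(ab,ac,ad;q)_n}{a^n(abcdq^{n-1};q)_n}\sum_{k=0}^n\frac{(q^{-n},q^{n-1}abcd,az,az^{-1};q)_k}{(ab,ac,ad,q;q)_k}q^k$, a symmetric Laurent polynomial in $z$ (invariant under $z\mapsto z^{-1}$) of the form $z^n+z^{-n}+$ lower terms, symmetric in $a,b,c,d$ (extended by continuity where formulas degenerate). *)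

(* Defs.v *)
From HB Require Import structures.
From mathcomp Require Import all_boot all_order all_algebra.
Set Implicit Arguments. Unset Strict Implicit. Unset Printing Implicit Defensive.
Import Order.TTheory GRing.Theory Num.Theory.
Local Open Scope ring_scope.

Definition qpoch {R : ringType} (x q : R) (k : nat) : R :=
  \prod_(j < k) (1 - x * q ^+ j).

Definition AW {R : fieldType} (n : nat) (z a b c d q : R) : R :=
  (qpoch (a * b) q n * qpoch (a * c) q n * qpoch (a * d) q n)
  / (a ^+ n * qpoch (a * b * c * d * q ^ (n%:Z - 1)) q n)
  * \sum_(k < n.+1)
      (qpoch (q ^ (- n%:Z)) q k * qpoch (q ^ (n%:Z - 1) * (a * b * c * d)) q k
       * qpoch (a * z) q k * qpoch (a * z^-1) q k)
      / (qpoch (a * b) q k * qpoch (a * c) q k * qpoch (a * d) q k * qpoch q q k)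
      * q ^+ k.

(* Genericity: the normalizing factor of P_n(.;a,b,c,d|q) in the defining
   formula is finite and nonzero (a <> 0, (ab,ac,ad;q)_n <> 0,
   (abcd q^(n-1);q)_n <> 0); these also make all denominators
   (ab,ac,ad;q)_k, k <= n, nonzero. *)
Definition AW_generic {R : fieldType} (n : nat) (a b c d q : R) : Prop :=
  [/\ a != 0, qpoch (a * b) q n != 0, qpoch (a * c) q n != 0,
      qpoch (a * d) q n != 0
    & qpoch (a * b * c * d * q ^ (n%:Z - 1)) q n != 0].

(* Main.v *)
Require Import Defs.
From HB Require Import structures.
From mathcomp Require Import all_boot all_order all_algebra.
From mathcomp Require Import ring lra.
Import Order.TTheory GRing.Theory Num.Theory.
Local Open Scope ring_scope.

Ltac sidec := repeat (first [done | apply/andP; split]).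
Ltac fld := field; sidec.

Section AWproof.
Variable R : numClosedFieldType.
Implicit Types (a b c d q x z : R).

Lemma qpochS x q k : qpoch x q k.+1 = qpoch x q k * (1 - x * q ^+ k).
Proof. by rewrite /qpoch big_ord_recr. Qed.

Lemma qpoch_front x q k : qpoch x q k.+1 = (1 - x) * qpoch (x * q) q k.
Proof.
rewrite /qpoch big_ord_recl expr0 mulr1; congr (_ * _).
by apply: eq_bigr => i _; rewrite exprS mulrA.
Qed.

Lemma qpoch0 x q : qpoch x q 0 = 1.
Proof. by rewrite /qpoch big_ord0. Qed.

Lemma qpoch_neq0 x q k n : (k <= n)%N -> qpoch x q n != 0 -> qpoch x q k != 0.
Proof.
elim: n => [|n IH]; first by rewrite leqn0 => /eqP ->.
rewrite leq_eqVlt => /orP [/eqP -> //| lt] H.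
apply: IH => //; move: H; rewrite qpochS mulf_eq0 negb_or => /andP[] //.
Qed.

Definition fac c : {poly R} := (- c)%:P * 'X + (1 + c ^+ 2)%:P.
Definition Phi a q k : {poly R} := \prod_(j < k) fac (a * q ^+ j).
Definition xz z := z + z^-1.

Lemma Phi_eval a q k z : z != 0 ->
  (Phi a q k).[xz z] = qpoch (a * z) q k * qpoch (a * z^-1) q k.
Proof.
move=> z0; rewrite /Phi /qpoch horner_prod -big_split /=.
apply: eq_bigr => i _; rewrite /fac hornerMXaddC !hornerC /xz.
by field.
Qed.

Lemma PhiS a q k : Phi a q k.+1 = Phi a q k * fac (a * q ^+ k).
Proof. by rewrite /Phi big_ord_recr. Qed.

Lemma size_fac c : c != 0 -> size (fac c) = 2.
Proof.
move=> c0; rewrite /fac size_MXaddC polyC_eq0 oppr_eq0 (negPf c0) /=.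
by rewrite size_polyC oppr_eq0 c0.
Qed.

Lemma lead_fac c : c != 0 -> lead_coef (fac c) = - c.
Proof.
move=> c0; rewrite lead_coefE size_fac //= /fac coefD coefMX coefC /= coefC /=.
by rewrite addr0.
Qed.

Lemma Phi_size_lead a q k : a != 0 -> q != 0 ->
  size (Phi a q k) = k.+1 /\ lead_coef (Phi a q k) = \prod_(j < k) (- (a * q ^+ j)).
Proof.
move=> a0 q0; elim: k => [|k [IHs IHl]].
  by rewrite /Phi !big_ord0 size_poly1 lead_coef1.
have c0 : a * q ^+ k != 0 by rewrite mulf_neq0 // expf_neq0.
have P0 : Phi a q k != 0 by rewrite -size_poly_eq0 IHs.
have F0 : fac (a * q ^+ k) != 0 by rewrite -size_poly_eq0 size_fac.
rewrite PhiS size_mul // size_fac // IHs addn2 /=; split => //.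
by rewrite lead_coefM IHl lead_fac // big_ord_recr.
Qed.

Definition Aw a b c d q z :=
  (1 - a * z) * (1 - b * z) * (1 - c * z) * (1 - d * z) / ((1 - z ^+ 2) * (1 - q * z ^+ 2)).
Definition Lop a b c d q (p : {poly R}) z :=
  Aw a b c d q z * (p.[xz (q * z)] - p.[xz z])
  + Aw a b c d q z^-1 * (p.[xz (z / q)] - p.[xz z]).
Definition lam q s (n : nat) := ((q ^+ n)^-1 - 1) * (1 - s * q ^+ n / q).
Definition mu a b c d q (k : nat) :=
  (1 - (q ^+ k)^-1) * (1 - a * b * q ^+ k / q) * (1 - a * c * q ^+ k / q)
  * (1 - a * d * q ^+ k / q).
Definition goodq q z := [/\ z != 0, 1 - z ^+ 2 != 0, 1 - q * z ^+ 2 != 0 & z ^+ 2 - q != 0].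

Lemma Lop_Phi0 a b c d q z : Lop a b c d q (Phi a q 0) z = 0.
Proof. by rewrite /Lop /Phi big_ord0 !hornerC !subrr !mulr0 addr0. Qed.

Lemma Lop_Phi1 a b c d q z : q != 0 -> goodq q z ->
  Lop a b c d q (Phi a q 1) z =
  lam q (a * b * c * d) 1 * (Phi a q 1).[xz z] + mu a b c d q 1 * (Phi a q 0).[xz z].
Proof.
move=> q0 [z0 h1 h2 h3].
have qz0 : q * z != 0 by rewrite mulf_neq0.
have zq0 : z / q != 0 by rewrite mulf_neq0 ?invr_eq0.
rewrite /Lop !Phi_eval // /qpoch !big_ord1 !big_ord0 /Aw /lam /mu !expr1 !expr0.
have h4 : 1 - z^-1 ^+ 2 != 0.
  have -> : 1 - z^-1 ^+ 2 = - (1 - z ^+ 2) / z ^+ 2 by field.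
  by rewrite mulf_neq0 ?oppr_eq0 ?invr_eq0 ?expf_neq0.
have h5 : 1 - q * z^-1 ^+ 2 != 0.
  have -> : 1 - q * z^-1 ^+ 2 = (z ^+ 2 - q) / z ^+ 2 by field.
  by rewrite mulf_neq0 ?oppr_eq0 ?invr_eq0 ?expf_neq0.
field.
have h1' : z ^+ 2 - 1 != 0 by rewrite -oppr_eq0 opprB.
by repeat (first [done | apply/andP; split]).
Qed.

Lemma qpoch_back2 x q m :
  qpoch x q m.+2 = qpoch x q m * (1 - x * q ^+ m) * (1 - x * q ^+ m * q).
Proof. by rewrite !qpochS exprS [q * _]mulrC mulrA. Qed.

Lemma qpoch_front2 x q m :
  qpoch x q m.+2 = (1 - x) * (1 - x * q) * qpoch (x * q * q) q m.
Proof. by rewrite !qpoch_front mulrA. Qed.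

Lemma qpoch_mid x q m :
  qpoch x q m.+2 = (1 - x) * qpoch (x * q) q m * (1 - x * q * q ^+ m).
Proof. by rewrite qpoch_front qpochS mulrA. Qed.

Lemma goodq_inv q z : goodq q z -> 1 - z^-1 ^+ 2 != 0 /\ 1 - q * z^-1 ^+ 2 != 0.
Proof.
move=> [z0 h1 h2 h3]; split.
  have -> : 1 - z^-1 ^+ 2 = - (1 - z ^+ 2) / z ^+ 2 by fld.
  by rewrite mulf_neq0 ?oppr_eq0 ?invr_eq0 ?expf_neq0.
have -> : 1 - q * z^-1 ^+ 2 = (z ^+ 2 - q) / z ^+ 2 by fld.
by rewrite mulf_neq0 ?oppr_eq0 ?invr_eq0 ?expf_neq0.
Qed.

Lemma Lop_PhiSS a b c d q z m : q != 0 -> goodq q z ->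
  Lop a b c d q (Phi a q m.+2) z =
  lam q (a * b * c * d) m.+2 * (Phi a q m.+2).[xz z] + mu a b c d q m.+2 * (Phi a q m.+1).[xz z].
Proof.
move=> q0 G; have [z0 h1 h2 h3] := G; have [h4 h5] := goodq_inv _ _ G.
have h1' : z ^+ 2 - 1 != 0 by rewrite -oppr_eq0 opprB.
have qz0 : q * z != 0 by rewrite mulf_neq0.
have zq0 : z / q != 0 by rewrite mulf_neq0 ?invr_eq0.
rewrite /Lop !Phi_eval //.
rewrite (qpoch_mid (a * z)) (qpoch_mid (a * z^-1)) (qpoch_back2 (a * (q * z))).
rewrite (qpoch_front2 (a * (q * z)^-1)) (qpoch_front2 (a * (z / q))).
rewrite (qpoch_back2 (a * (z / q)^-1)) (qpoch_front (a * z)) (qpoch_front (a * z^-1)).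
have -> : a * (q * z) = a * z * q by ring.
have -> : a * (q * z)^-1 * q * q = a * z^-1 * q by fld.
have -> : a * (z / q) * q * q = a * z * q by fld.
have -> : a * (z / q)^-1 = a * z^-1 * q by fld.
set C1 := qpoch (a * z * q) q m; set C2 := qpoch (a * z^-1 * q) q m.
rewrite /Aw /lam /mu !exprS.
set Q := q ^+ m.
have Q0 : Q != 0 by rewrite expf_neq0.
fld.
Qed.

Lemma Lop_PhiS a b c d q z k : q != 0 -> goodq q z ->
  Lop a b c d q (Phi a q k.+1) z =
  lam q (a * b * c * d) k.+1 * (Phi a q k.+1).[xz z] + mu a b c d q k.+1 * (Phi a q k).[xz z].
Proof. by case: k => [|m]; [apply: Lop_Phi1 | apply: Lop_PhiSS]. Qed.

Lemma Lop_add a b c d q p r z : Lop a b c d q (p + r) z = Lop a b c d q p z + Lop a b c d q r z.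
Proof. rewrite /Lop !hornerD; ring. Qed.

Lemma Lop_scale a b c d q e p z : Lop a b c d q (e *: p) z = e * Lop a b c d q p z.
Proof. rewrite /Lop !hornerZ; ring. Qed.

Lemma Lop_zero a b c d q z : Lop a b c d q 0 z = 0.
Proof. by rewrite /Lop !horner0 !subrr !mulr0 addr0. Qed.

Lemma Lop_opp a b c d q p z : Lop a b c d q (- p) z = - Lop a b c d q p z.
Proof. rewrite /Lop !hornerN; ring. Qed.

Lemma Lop_sum a b c d q (I : Type) (r : seq I) (P : pred I) (F : I -> {poly R}) z :
  Lop a b c d q (\sum_(i <- r | P i) F i) z = \sum_(i <- r | P i) Lop a b c d q (F i) z.
Proof.
apply: (big_morph (fun p => Lop a b c d q p z)).
  by move=> x y; rewrite Lop_add.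
exact: Lop_zero.
Qed.

Lemma cz {p : {poly R}} {n j : nat} : (size p <= n)%N -> (n <= j)%N -> p`_j = 0.
Proof. by move=> /leq_sizeP H /H. Qed.

Lemma lam0 q s : lam q s 0 = 0.
Proof. by rewrite /lam expr0 invr1 subrr mul0r. Qed.

Lemma Lpoly a b c d q m (r : {poly R}) : a != 0 -> q != 0 ->
  (size r <= m.+1)%N -> exists s : {poly R}, (size s <= m)%N /\
   forall z, goodq q z -> Lop a b c d q r z = lam q (a * b * c * d) m * r.[xz z] + s.[xz z].
Proof.
move=> a0 q0; elim: m r => [|m IH] r Hr.
- have [Hs Hl] := Phi_size_lead a q 0 a0 q0.
  pose e := r`_0 / lead_coef (Phi a q 0).
  have lc0 : lead_coef (Phi a q 0) != 0 by rewrite lead_coef_eq0 -size_poly_eq0 Hs.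
  have Er : r = e *: Phi a q 0.
    apply/polyP => j; rewrite coefZ; case: j => [|j].
      have E0 : (Phi a q 0)`_0 = lead_coef (Phi a q 0) by rewrite lead_coefE Hs.
      by rewrite E0 /e divfK.
    by rewrite (cz Hr) // (cz (eq_leq Hs)) // mulr0.
  exists 0; split; first by rewrite size_poly0.
  move=> z G.
  by rewrite Er Lop_scale Lop_Phi0 lam0 horner0 !mul0r mulr0 addr0.
- have [Hs Hl] := Phi_size_lead a q m.+1 a0 q0.
  have lc0 : lead_coef (Phi a q m.+1) != 0 by rewrite lead_coef_eq0 -size_poly_eq0 Hs.
  pose e := r`_m.+1 / lead_coef (Phi a q m.+1).
  pose r' := r - e *: Phi a q m.+1.
  have Hr' : (size r' <= m.+1)%N.
    apply/leq_sizeP => j; rewrite leq_eqVlt => /orP [/eqP <- | lt].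
      have E1 : (Phi a q m.+1)`_m.+1 = lead_coef (Phi a q m.+1) by rewrite lead_coefE Hs.
      by rewrite coefB coefZ E1 /e divfK // subrr.
    by rewrite coefB coefZ (cz Hr) // (cz (eq_leq Hs)) // mulr0 subrr.
  have [s' [Hs' Es']] := IH r' Hr'.
  have [Hs1 _] := Phi_size_lead a q m a0 q0.
  exists ((lam q (a * b * c * d) m - lam q (a * b * c * d) m.+1) *: r'
          + (e * mu a b c d q m.+1) *: Phi a q m + s').
  split.
    apply/leq_sizeP => j lt.
    by rewrite !coefD !coefZ (cz Hr') // (cz (eq_leq Hs1)) // (cz Hs') ?(leq_trans _ lt) // !mulr0 !addr0.
  move=> z G.
  have Er : r = e *: Phi a q m.+1 + r' by rewrite /r' addrC subrK.
  move: (Es' z G); clearbody r' e => E'.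
  rewrite Er Lop_add Lop_scale Lop_PhiS // E' // !hornerD !hornerZ; ring.
Qed.

Definition gd q z := [/\ z != 0, z ^+ 4 != 1, (q * z ^+ 2) ^+ 2 != 1 & z ^+ 4 != q ^+ 2].

Lemma gd_goodq q z : q != 0 -> gd q z -> goodq q z /\ goodq (q ^+ 2) (z ^+ 2).
Proof.
move=> q0 [z0 h1 h2 h3].
have E4 : z ^+ 4 = (z ^+ 2) ^+ 2 by rewrite -exprM.
split; split.
- by [].
- apply: contra h1; rewrite subr_eq0 => /eqP E; by rewrite E4 -E expr1n.
- apply: contra h2; rewrite subr_eq0 => /eqP E; by rewrite -E expr1n.
- apply: contra h3; rewrite subr_eq0 => /eqP E; by rewrite E4 E.
- by rewrite expf_neq0.
- apply: contra h1; rewrite subr_eq0 => /eqP E; by rewrite E4 -E.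
- apply: contra h2; rewrite subr_eq0 => /eqP E; by rewrite exprMn -E.
- apply: contra h3; rewrite subr_eq0 => /eqP E; by rewrite E4 E.
Qed.

Lemma zeta_ex : exists zeta : R, zeta ^+ 4 = -1.
Proof.
have [x Hx] := @solve_monicpoly R 4 (fun i => if i == 0%N then -1 else 0) isT.
exists x; rewrite Hx !big_ord_recr big_ord0 /=; ring.
Qed.

Lemma V_zero q (P : {poly R}) : 0 < q ->
  (forall z, gd q z -> P.[xz z] = 0) -> P = 0.
Proof.
move=> qp HP; have [zt zt4] := zeta_ex.
have zt0 : zt != 0.
  apply/eqP => Z; move: zt4; rewrite Z expr0n /= => /eqP; by rewrite eq_sym oppr_eq0 oner_eq0.
pose xs := [seq xz (zt * (i.+1)%:R) | i <- iota 0 (size P)].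
have npos (i : nat) : 0 < (i.+1)%:R :> R by rewrite ltr0n.
have gdi (i : nat) : gd q (zt * (i.+1)%:R).
  have n4 : 0 < (i.+1)%:R ^+ 4 :> R by rewrite exprn_gt0.
  have z4 : (zt * (i.+1)%:R) ^+ 4 = - (i.+1)%:R ^+ 4 by rewrite exprMn zt4 mulN1r.
  split.
  - by rewrite mulf_neq0 // gt_eqF.
  - rewrite z4; apply/negP => /eqP E.
    have : - (i.+1)%:R ^+ 4 < 0 :> R by rewrite oppr_lt0.
    by rewrite E ltr10.
  - rewrite exprMn -exprM /= z4; apply/negP => /eqP E.
    have : q ^+ 2 * - (i.+1)%:R ^+ 4 < 0 :> R.
      by rewrite mulrN oppr_lt0 mulr_gt0 // exprn_gt0.
    by rewrite E ltr10.
  - rewrite z4; apply/negP => /eqP E.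
    have : - (i.+1)%:R ^+ 4 < 0 :> R by rewrite oppr_lt0.
    have q2 : 0 < q ^+ 2 by rewrite exprn_gt0.
    by rewrite E => /(lt_trans q2); rewrite ltxx.
apply/eqP; apply: contraT => P0.
have := max_poly_roots P0 _ _.
move=> /(_ xs); rewrite size_map size_iota ltnn; apply.
  apply/allP => x /mapP [i _ ->]; rewrite /root; apply/eqP; exact: HP.
rewrite map_inj_in_uniq ?iota_uniq //.
move=> i j _ _ /eqP E; apply/eqP; move: E.
set n := (i.+1)%:R; set m := (j.+1)%:R.
have n0 : n != 0 by rewrite gt_eqF.
have m0 : m != 0 by rewrite gt_eqF.
have np : 0 < n by [].
have mp : 0 < m by [].
have nE : n = (i.+1)%:R by [].
have mE : m = (j.+1)%:R by [].
clearbody n m => E.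
have : (n - m) * (zt ^+ 2 * n * m - 1) = 0.
  have -> : (n - m) * (zt ^+ 2 * n * m - 1) = zt * n * m * (xz (zt * n) - xz (zt * m)).
    by rewrite /xz; fld.
  by rewrite (eqP E) subrr mulr0.
move/eqP; rewrite mulf_eq0 => /orP [|].
  by rewrite subr_eq0 nE mE eqr_nat eqSS.
rewrite subr_eq0 => /eqP E2.
have : (zt ^+ 2 * n * m) ^+ 2 = 1 by rewrite E2 expr1n.
rewrite !exprMn => E3.
have Z : zt ^+ 2 * zt ^+ 2 = -1 by rewrite -exprD.
rewrite Z -mulrA mulN1r in E3.
have : - (n ^+ 2 * m ^+ 2) < 0 by rewrite oppr_lt0 mulr_gt0 // exprn_gt0.
by rewrite E3 ltr10.
Qed.

Lemma U_zero a b c d q N (p : {poly R}) : a != 0 -> 0 < q ->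
  (size p <= N)%N ->
  (forall m, (m < N)%N -> lam q (a * b * c * d) m != lam q (a * b * c * d) N) ->
  (forall z, gd q z -> Lop a b c d q p z = lam q (a * b * c * d) N * p.[xz z]) -> p = 0.
Proof.
move=> a0 qp Hs Hl HL; have q0 : q != 0 by rewrite gt_eqF.
apply/eqP; apply: contraT => p0.
have sp : size p = (size p).-1.+1 by rewrite prednK // size_poly_gt0.
set m := (size p).-1 in sp.
have [s [Ss Es]] := Lpoly a b c d q m p a0 q0 (eq_leq sp).
have mN : (m < N)%N by rewrite -sp.
pose P := (lam q (a * b * c * d) N - lam q (a * b * c * d) m) *: p - s.
have P0 : P = 0.
  apply: (@V_zero q P qp) => z G.
  have [Gq _] := gd_goodq q z q0 G.
  move: (HL z G); rewrite Es // => E.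
  rewrite /P hornerD hornerN hornerZ.
  set u := p.[xz z]; set v := s.[xz z].
  have -> : (lam q (a * b * c * d) N - lam q (a * b * c * d) m) * u + - v
    = lam q (a * b * c * d) N * u - (lam q (a * b * c * d) m * u + v) by ring.
  by rewrite E subrr.
have : P`_m = 0 by rewrite P0 coef0.
rewrite /P coefB coefZ (cz Ss) // subr0.
have pm : p`_m != 0 by rewrite -lead_coefE lead_coef_eq0.
move/eqP; rewrite mulf_eq0 (negPf pm) orbF subr_eq0 eq_sym.
by rewrite (negPf (Hl m mN)).
Qed.

Lemma qzN q (n : nat) : q ^ (- n%:Z) = (q ^+ n)^-1.
Proof. by rewrite -exprnN. Qed.

Lemma qz1 q (n : nat) : q != 0 -> q ^ (n%:Z - 1) = q ^+ n / q.
Proof. by move=> q0; rewrite expfzDr // exprN1 -exprnP. Qed.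

Definition Norm a b c d q (n : nat) :=
  (qpoch (a * b) q n * qpoch (a * c) q n * qpoch (a * d) q n)
  / (a ^+ n * qpoch (a * b * c * d * q ^ (n%:Z - 1)) q n).
Definition num a b c d q (n k : nat) :=
  (qpoch (q ^ (- n%:Z)) q k * qpoch (q ^ (n%:Z - 1) * (a * b * c * d)) q k)
  / (qpoch (a * b) q k * qpoch (a * c) q k * qpoch (a * d) q k * qpoch q q k)
  * q ^+ k.
Definition ecoef a b c d q n k := Norm a b c d q n * num a b c d q n k.
Definition AWp a b c d q n : {poly R} := \sum_(k < n.+1) ecoef a b c d q n k *: Phi a q k.

Lemma AW_eval a b c d q n z : z != 0 ->
  AW n z a b c d q = (AWp a b c d q n).[xz z].
Proof.
move=> z0; rewrite /AW /AWp horner_sum -/(Norm a b c d q n) mulr_sumr.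
apply: eq_bigr => k _; rewrite hornerZ Phi_eval // /ecoef /num.
rewrite /Norm; ring.
Qed.

Lemma qpochS_neq0 x q k : qpoch x q k.+1 != 0 -> qpoch x q k != 0 /\ 1 - x * q ^+ k != 0.
Proof. by rewrite qpochS mulf_eq0 negb_or => /andP. Qed.
Arguments qpochS_neq0 {x q k}.
Arguments qpoch_neq0 {x q k n}.

Lemma ecoef_rec a b c d q n k : q != 0 -> (k < n)%N ->
  qpoch (a * b) q n != 0 -> qpoch (a * c) q n != 0 -> qpoch (a * d) q n != 0 ->
  qpoch q q n != 0 ->
  ecoef a b c d q n k.+1 * mu a b c d q k.+1
  = (lam q (a * b * c * d) n - lam q (a * b * c * d) k) * ecoef a b c d q n k.
Proof.
move=> q0 kn H1 H2 H3 H4.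
have [h1 h1'] := qpochS_neq0 (qpoch_neq0 kn H1).
have [h2 h2'] := qpochS_neq0 (qpoch_neq0 kn H2).
have [h3 h3'] := qpochS_neq0 (qpoch_neq0 kn H3).
have [h4 h4'] := qpochS_neq0 (qpoch_neq0 kn H4).
rewrite /ecoef /num /mu /lam !qpochS qzN qz1 //.
set Q := q ^+ k. set P := q ^+ n.
have Q0 : Q != 0 by rewrite expf_neq0.
have P0 : P != 0 by rewrite expf_neq0.
rewrite !exprS -/Q.
fld.
Qed.

Lemma tel (n : nat) (e l m f : nat -> R) : l 0%N = 0 ->
  (forall k, (k < n)%N -> e k.+1 * m k.+1 = (l n - l k) * e k) ->
  \sum_(k < n) e k.+1 * (l k.+1 * f k.+1 + m k.+1 * f k)
  = l n * \sum_(k < n.+1) e k * f k.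
Proof.
move=> l0 rec.
suff H : forall j, (j <= n)%N ->
  \sum_(k < j) e k.+1 * (l k.+1 * f k.+1 + m k.+1 * f k)
  = e j * l j * f j + l n * \sum_(k < j) e k * f k.
  by rewrite H // [in RHS]big_ord_recr /=; ring.
elim => [|j IH] jn; first by rewrite !big_ord0 l0; ring.
rewrite !big_ord_recr /= IH ?(ltnW jn) //.
have := rec j jn => E.
rewrite mulrDr [e j.+1 * (m _ * _)]mulrA E; ring.
Qed.

Lemma Lop_AWp a b c d q n z : q != 0 -> goodq q z ->
  qpoch (a * b) q n != 0 -> qpoch (a * c) q n != 0 -> qpoch (a * d) q n != 0 ->
  qpoch q q n != 0 ->
  Lop a b c d q (AWp a b c d q n) z = lam q (a * b * c * d) n * (AWp a b c d q n).[xz z].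
Proof.
move=> q0 G H1 H2 H3 H4.
rewrite /AWp Lop_sum big_ord_recl /= Lop_scale Lop_Phi0 mulr0 add0r.
under eq_bigr => i _ do rewrite /= Lop_scale Lop_PhiS //.
rewrite horner_sum.
under [in RHS]eq_bigr => i _ do rewrite hornerZ.
rewrite (tel n (fun k => ecoef a b c d q n k) (fun k => lam q (a * b * c * d) k)
   (fun k => mu a b c d q k) (fun k => (Phi a q k).[xz z])) //.
  exact: lam0.
by move=> k kn; apply: ecoef_rec.
Qed.

Lemma Kid a q n : q != 0 ->
  qpoch ((q ^+ n)^-1) q n * \prod_(j < n) (- (a * q ^+ j)) * q ^+ n
  = a ^+ n * qpoch q q n.
Proof.
move=> q0.
have Hc : q ^+ n = \prod_(j < n) q by rewrite prodr_const card_ord.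
have Ha : a ^+ n = \prod_(j < n) a by rewrite prodr_const card_ord.
rewrite Hc Ha /qpoch (reindex_inj rev_ord_inj) /= -!big_split /=.
apply: eq_bigr => j _; rewrite -Hc.
have jn : (j < n)%N := ltn_ord j.
have E : q ^+ n = q ^+ (n - j.+1) * q ^+ j.+1 by rewrite -exprD subnK.
rewrite E exprS.
have A0 : q ^+ (n - j.+1) != 0 by rewrite expf_neq0.
have B0 : q ^+ j != 0 by rewrite expf_neq0.
fld.
Qed.

Lemma coef_AWp a b c d q n j :
  (AWp a b c d q n)`_j = \sum_(k < n.+1) ecoef a b c d q n k * (Phi a q k)`_j.
Proof. by rewrite /AWp coef_sum; apply: eq_bigr => k _; rewrite coefZ. Qed.

Lemma AWp_monic a b c d q n : a != 0 -> q != 0 ->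
  qpoch (a * b) q n != 0 -> qpoch (a * c) q n != 0 -> qpoch (a * d) q n != 0 ->
  qpoch (a * b * c * d * q ^ (n%:Z - 1)) q n != 0 -> qpoch q q n != 0 ->
  size (AWp a b c d q n) = n.+1 /\ lead_coef (AWp a b c d q n) = 1.
Proof.
move=> a0 q0 H1 H2 H3 H5 H4.
have sz k : size (Phi a q k) = k.+1 by have [-> _] := Phi_size_lead a q k a0 q0.
have top : (AWp a b c d q n)`_n = 1.
  rewrite coef_AWp big_ord_recr /= big1 ?add0r.
    have [_ Hl] := Phi_size_lead a q n a0 q0.
    have -> : (Phi a q n)`_n = lead_coef (Phi a q n) by rewrite lead_coefE sz.
    rewrite Hl /ecoef /Norm /num qzN.
    have E : q ^ (n%:Z - 1) * (a * b * c * d) = a * b * c * d * q ^ (n%:Z - 1) by rewrite mulrC.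
    rewrite E.
    have K := Kid a q n q0.
    have an : a ^+ n != 0 by rewrite expf_neq0.
    set P := \prod_(j < n) - (a * q ^+ j) in K *.
    set Y := qpoch (a * b * c * d * q ^ (n%:Z - 1)) q n in H5 *.
    set X := qpoch ((q ^+ n)^-1) q n in K *.
    set Z := qpoch q q n in H4 K *.
    have -> : qpoch (a * b) q n * qpoch (a * c) q n * qpoch (a * d) q n / (a ^+ n * Y) *
      (X * Y / (qpoch (a * b) q n * qpoch (a * c) q n * qpoch (a * d) q n * Z) * q ^+ n) * P
      = (X * P * q ^+ n) / (a ^+ n * Z) by fld.
    by rewrite K divff // mulf_neq0.
  move=> k _; rewrite (cz (eq_leq (sz k))) ?mulr0 //.
have Hs : (size (AWp a b c d q n) <= n.+1)%N.
  apply/leq_sizeP => j jn; rewrite coef_AWp big1 // => k _.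
  by rewrite (cz (eq_leq (sz k))) ?mulr0 // (leq_trans _ jn) // ltnS.
have Hs' : size (AWp a b c d q n) = n.+1.
  apply/eqP; rewrite eqn_leq Hs /= ltnNge; apply/negP => H.
  by move: top; rewrite (cz H) // => /eqP; rewrite eq_sym oner_eq0.
by split => //; rewrite lead_coefE Hs' /= top.
Qed.

Lemma q_facts q : 0 < q -> q < 1 ->
  [/\ q != 0, forall k, (0 < k)%N -> q ^+ k != 1 & forall n, qpoch q q n != 0].
Proof.
move=> q0 q1; have qn0 : q != 0 by rewrite gt_eqF.
have qk : forall k, (0 < k)%N -> q ^+ k != 1.
  move=> k k0; rewrite lt_eqF //; rewrite exprn_ilt1 ?ltW //; by rewrite -lt0n.
split => // n; elim: n => [|n IH]; first by rewrite qpoch0 oner_eq0.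
rewrite qpochS mulf_neq0 // subr_eq0 eq_sym -exprS.
exact: qk.
Qed.

Lemma lam_neq q s N m : 0 < q -> q < 1 -> (m < N)%N ->
  qpoch (s * q ^ (N%:Z - 1)) q N != 0 -> lam q s m != lam q s N.
Proof.
move=> q0 q1 mN H.
have [qn0 qk _] := q_facts q q0 q1.
have [_ h] := qpochS_neq0 (qpoch_neq0 mN H).
rewrite qz1 // in h.
have E : q ^+ N = q ^+ m * q ^+ (N - m) by rewrite -exprD subnKC // ltnW.
have Qm : q ^+ m != 0 by rewrite expf_neq0.
have QNm : q ^+ (N - m) != 0 by rewrite expf_neq0.
have QN1 : q ^+ (N - m) != 1 by apply: qk; rewrite subn_gt0.
have QN : q ^+ N != 0 by rewrite expf_neq0.
rewrite -subr_eq0.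
have -> : lam q s m - lam q s N
   = ((q ^+ m)^-1 - (q ^+ N)^-1) * (1 - s * (q ^+ N / q) * q ^+ m).
  by rewrite /lam; fld.
rewrite mulf_neq0 // E.
have -> : (q ^+ m)^-1 - (q ^+ m * q ^+ (N - m))^-1
   = (q ^+ (N - m) - 1) / (q ^+ m * q ^+ (N - m)) by fld.
by rewrite mulf_neq0 ?invr_eq0 ?mulf_neq0 // subr_eq0.
Qed.

Lemma size_Q2 : size ('X^2 - 2%:P : {poly R}) = 3.
Proof. by rewrite size_XnsubC. Qed.

Lemma lead_Q2 : lead_coef ('X^2 - 2%:P : {poly R}) = 1.
Proof. by apply/monicP; rewrite monicXnsubC. Qed.

Lemma comp_monic (G : {poly R}) n : size G = n.+1 -> lead_coef G = 1 ->
  size (G \Po ('X^2 - 2%:P)) = (2 * n).+1 /\ lead_coef (G \Po ('X^2 - 2%:P)) = 1.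
Proof.
move=> sG lG.
have h := size_comp_poly G ('X^2 - 2%:P).
rewrite size_Q2 sG /= in h.
have G0 : G != 0 by rewrite -size_poly_eq0 sG.
have g0 : G \Po ('X^2 - 2%:P) != 0 by rewrite comp_poly_eq0 ?size_Q2.
split.
  by rewrite -[size _]prednK ?size_poly_gt0 // h mulnC.
by rewrite lead_coef_comp ?size_Q2 // lG lead_Q2 expr1n mulr1.
Qed.

Lemma comp_eval (G : {poly R}) z : z != 0 ->
  (G \Po ('X^2 - 2%:P)).[xz z] = G.[xz (z ^+ 2)].
Proof.
move=> z0; rewrite horner_comp !hornerE /xz; congr (G.[_]).
by fld.
Qed.

Lemma monic_sub_size (p r : {poly R}) N : size p = N.+1 -> size r = N.+1 ->
  lead_coef p = 1 -> lead_coef r = 1 -> (size (p - r)%R <= N)%N.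
Proof.
move=> sp sr lp lr; apply/leq_sizeP => j; rewrite leq_eqVlt => /orP [/eqP <-|jN].
  have Ep : p`_N = lead_coef p by rewrite lead_coefE sp.
  have Er : r`_N = lead_coef r by rewrite lead_coefE sr.
  by rewrite coefB Ep Er lp lr subrr.
by rewrite coefB (cz (eq_leq sp)) ?(cz (eq_leq sr)) ?subrr.
Qed.

Lemma sq_split x c : x ^+ 2 != c ^+ 2 -> x - c != 0 /\ x + c != 0.
Proof.
move=> h; split; apply: contra h; rewrite ?subr_eq0 ?addr_eq0 => /eqP ->.
  by []. by rewrite sqrrN.
Qed.

Lemma gd_all q z : gd q z ->
  z != 0 /\ z ^+ 2 - 1 != 0 /\ z ^+ 2 + 1 != 0 /\ q * z ^+ 2 - 1 != 0 /\
      q * z ^+ 2 + 1 != 0 /\ z ^+ 2 - q != 0 /\ z ^+ 2 + q != 0.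
Proof.
move=> [z0 h1 h2 h3].
have E4 : z ^+ 4 = (z ^+ 2) ^+ 2 by rewrite -exprM.
have h1' : (z ^+ 2) ^+ 2 != 1 ^+ 2 by rewrite expr1n -E4.
have h2' : (q * z ^+ 2) ^+ 2 != 1 ^+ 2 by rewrite expr1n.
have h3' : (z ^+ 2) ^+ 2 != q ^+ 2 by rewrite -E4.
have [a1 a2] := sq_split _ _ h1'; have [b1 b2] := sq_split _ _ h2'.
have [c1 c2] := sq_split _ _ h3'.
by [].
Qed.

Lemma Lop_even a b q (G : {poly R}) z : q != 0 -> gd q z ->
  Lop a b (- a) (- b) q (G \Po ('X^2 - 2%:P)) z
  = Lop (a ^+ 2) (b ^+ 2) (-1) (- q) (q ^+ 2) G (z ^+ 2).
Proof.
move=> q0 G0; have [z0 [h1 [h2 [h3 [h4 [h5 h6]]]]]] := gd_all q z G0.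
have qz0 : q * z != 0 by rewrite mulf_neq0.
have zq0 : z / q != 0 by rewrite mulf_neq0 ?invr_eq0.
rewrite /Lop !comp_eval // exprMn.
have -> : (z / q) ^+ 2 = z ^+ 2 / q ^+ 2 by rewrite exprMn exprVn.
set u0 := G.[xz (z ^+ 2)]; set u1 := G.[xz (q ^+ 2 * z ^+ 2)];
set u2 := G.[xz (z ^+ 2 / q ^+ 2)].
have k1 : (z ^+ 2) ^+ 2 - q ^+ 2 != 0.
  have -> : (z ^+ 2) ^+ 2 - q ^+ 2 = (z ^+ 2 - q) * (z ^+ 2 + q) by ring.
  by rewrite mulf_neq0.
have k2 : (z ^+ 2) ^+ 2 - 1 != 0.
  have -> : (z ^+ 2) ^+ 2 - 1 = (z ^+ 2 - 1) * (z ^+ 2 + 1) by ring.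
  by rewrite mulf_neq0.
have k3 : 1 - q ^+ 2 * z ^+ 4 != 0.
  have -> : 1 - q ^+ 2 * z ^+ 4 = - ((q * z ^+ 2 - 1) * (q * z ^+ 2 + 1)) by ring.
  by rewrite oppr_eq0 mulf_neq0.
have k4 : 1 - (z ^+ 2) ^+ 2 != 0.
  have -> : 1 - (z ^+ 2) ^+ 2 = - ((z ^+ 2) ^+ 2 - 1) by ring.
  by rewrite oppr_eq0.
have k5 : 1 - q * z ^+ 2 != 0.
  have -> : 1 - q * z ^+ 2 = - (q * z ^+ 2 - 1) by ring.
  by rewrite oppr_eq0.
have k6 : 1 - z ^+ 2 != 0.
  have -> : 1 - z ^+ 2 = - (z ^+ 2 - 1) by ring.
  by rewrite oppr_eq0.
rewrite /Aw; fld.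
Qed.

Lemma Lop_odd a b q (G : {poly R}) z : q != 0 -> gd q z ->
  Lop a b (- a) (- b) q ((G \Po ('X^2 - 2%:P)) * 'X) z
  = xz z * (Lop (a ^+ 2) (b ^+ 2) (- q) (- q ^+ 2) (q ^+ 2) G (z ^+ 2) / q
            + (q^-1 - 1) * (1 - a ^+ 2 * b ^+ 2) * G.[xz (z ^+ 2)]).
Proof.
move=> q0 G0; have [z0 [h1 [h2 [h3 [h4 [h5 h6]]]]]] := gd_all q z G0.
have qz0 : q * z != 0 by rewrite mulf_neq0.
have zq0 : z / q != 0 by rewrite mulf_neq0 ?invr_eq0.
rewrite /Lop !hornerMX !comp_eval // exprMn.
have -> : (z / q) ^+ 2 = z ^+ 2 / q ^+ 2 by rewrite exprMn exprVn.
set u0 := G.[xz (z ^+ 2)]; set u1 := G.[xz (q ^+ 2 * z ^+ 2)];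
set u2 := G.[xz (z ^+ 2 / q ^+ 2)].
have k1 : (z ^+ 2) ^+ 2 - q ^+ 2 != 0.
  have -> : (z ^+ 2) ^+ 2 - q ^+ 2 = (z ^+ 2 - q) * (z ^+ 2 + q) by ring.
  by rewrite mulf_neq0.
have k2 : (z ^+ 2) ^+ 2 - 1 != 0.
  have -> : (z ^+ 2) ^+ 2 - 1 = (z ^+ 2 - 1) * (z ^+ 2 + 1) by ring.
  by rewrite mulf_neq0.
have k3 : 1 - q ^+ 2 * z ^+ 4 != 0.
  have -> : 1 - q ^+ 2 * z ^+ 4 = - ((q * z ^+ 2 - 1) * (q * z ^+ 2 + 1)) by ring.
  by rewrite oppr_eq0 mulf_neq0.
have k4 : 1 - (z ^+ 2) ^+ 2 != 0.
  have -> : 1 - (z ^+ 2) ^+ 2 = - ((z ^+ 2) ^+ 2 - 1) by ring.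
  by rewrite oppr_eq0.
have k5 : 1 - q * z ^+ 2 != 0.
  have -> : 1 - q * z ^+ 2 = - (q * z ^+ 2 - 1) by ring.
  by rewrite oppr_eq0.
have k6 : 1 - z ^+ 2 != 0.
  have -> : 1 - z ^+ 2 = - (z ^+ 2 - 1) by ring.
  by rewrite oppr_eq0.
rewrite /Aw /xz; fld.
Qed.

Lemma lam_even a b q n : q != 0 ->
  lam (q ^+ 2) (a ^+ 2 * b ^+ 2 * -1 * - q) n = lam q (a * b * - a * - b) (2 * n).
Proof.
move=> q0; rewrite /lam -exprM.
have Q0 : q ^+ (2 * n) != 0 by rewrite expf_neq0.
set Q := q ^+ (2 * n); fld.
Qed.

Lemma lam_odd a b q n : q != 0 ->
  lam (q ^+ 2) (a ^+ 2 * b ^+ 2 * - q * - q ^+ 2) n / q + (q^-1 - 1) * (1 - a ^+ 2 * b ^+ 2)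
  = lam q (a * b * - a * - b) (2 * n).+1.
Proof.
move=> q0; rewrite /lam -exprM [q ^+ (2 * n).+1]exprS.
have Q0 : q ^+ (2 * n) != 0 by rewrite expf_neq0.
set Q := q ^+ (2 * n); fld.
Qed.
End AWproof.
Arguments AWp {R}.

Theorem mainTheorem5 (R : numClosedFieldType) (q a b : R) (n : nat) :
  0 < q -> q < 1 -> a != 0 -> b != 0 ->
  AW_generic (2 * n) a b (- a) (- b) q ->
  AW_generic (2 * n).+1 a b (- a) (- b) q ->
  AW_generic n (a ^+ 2) (b ^+ 2) (-1) (- q) (q ^+ 2) ->
  AW_generic n (a ^+ 2) (b ^+ 2) (- q) (- q ^+ 2) (q ^+ 2) ->
  forall z : R, z != 0 ->
    AW (2 * n) z a b (- a) (- b) q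
      = AW n (z ^+ 2) (a ^+ 2) (b ^+ 2) (-1) (- q) (q ^+ 2)
    /\ AW (2 * n).+1 z a b (- a) (- b) q
      = (z + z^-1) * AW n (z ^+ 2) (a ^+ 2) (b ^+ 2) (- q) (- q ^+ 2) (q ^+ 2).
Proof.
move=> q0 q1 a0 b0 [_ g1 g2 g3 g4] [_ o1 o2 o3 o4] [a20 e1 e2 e3 e4] [_ f1 f2 f3 f4] z z0.
have [qn0 qk qqn] := q_facts _ q q0 q1.
have q20 : 0 < q ^+ 2 by rewrite exprn_gt0.
have q21 : q ^+ 2 < 1 by rewrite exprn_ilt1 // ltW.
have [q2n0 _ qq2n] := q_facts _ (q ^+ 2) q20 q21.
have z20 : z ^+ 2 != 0 by rewrite expf_neq0.
split.
- pose P := AWp a b (- a) (- b) q (2 * n).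
  have [sP lP] := AWp_monic _ a b (- a) (- b) q (2 * n) a0 qn0 g1 g2 g3 g4 (qqn _).
  pose G := AWp (a ^+ 2) (b ^+ 2) (-1) (- q) (q ^+ 2) n.
  have [sG lG] := AWp_monic _ (a ^+ 2) (b ^+ 2) (-1) (- q) (q ^+ 2) n a20 q2n0 e1 e2 e3 e4 (qq2n n).
  have [sg lg] := comp_monic _ G n sG lG.
  have D0 : P - (G \Po ('X^2 - 2%:P)) = 0.
    apply: (U_zero _ a b (- a) (- b) q (2 * n)) => //.
    + exact: (monic_sub_size _ _ _ _ sP sg lP lg).
    + by move=> m mn; apply: lam_neq.
    + move=> w Gw; have [Gq Gq2] := gd_goodq _ q w qn0 Gw.
      have w0 : w != 0 by case: Gw.
      rewrite Lop_add Lop_opp Lop_even // Lop_AWp // Lop_AWp // ?(qqn _) ?(qq2n _) //.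
      rewrite lam_even // hornerD hornerN comp_eval //; ring.
  have EP : P = G \Po ('X^2 - 2%:P) by apply/eqP; rewrite -subr_eq0 D0.
  by rewrite AW_eval // -/P EP comp_eval // -AW_eval.
- pose P := AWp a b (- a) (- b) q (2 * n).+1.
  have [sP lP] := AWp_monic _ a b (- a) (- b) q (2 * n).+1 a0 qn0 o1 o2 o3 o4 (qqn _).
  pose G := AWp (a ^+ 2) (b ^+ 2) (- q) (- q ^+ 2) (q ^+ 2) n.
  have [sG lG] := AWp_monic _ (a ^+ 2) (b ^+ 2) (- q) (- q ^+ 2) (q ^+ 2) n a20 q2n0 f1 f2 f3 f4 (qq2n n).
  have [sg lg] := comp_monic _ G n sG lG.
  have g0 : G \Po ('X^2 - 2%:P) != 0 by rewrite -size_poly_eq0 sg.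
  have sh : size ((G \Po ('X^2 - 2%:P)) * 'X) = (2 * n).+2 by rewrite size_mulX // sg.
  have lh : lead_coef ((G \Po ('X^2 - 2%:P)) * 'X) = 1 by rewrite lead_coefMX.
  have D0 : P - (G \Po ('X^2 - 2%:P)) * 'X = 0.
    apply: (U_zero _ a b (- a) (- b) q (2 * n).+1) => //.
    + exact: (monic_sub_size _ _ _ _ sP sh lP lh).
    + by move=> m mn; apply: lam_neq.
    + move=> w Gw; have [Gq Gq2] := gd_goodq _ q w qn0 Gw.
      have w0 : w != 0 by case: Gw.
      rewrite Lop_add Lop_opp Lop_odd // Lop_AWp // Lop_AWp // ?(qqn _) ?(qq2n _) //.
      rewrite -(lam_odd _ a b q n qn0) hornerD hornerN hornerMX comp_eval //; ring.
  have EP : P = (G \Po ('X^2 - 2%:P)) * 'X by apply/eqP; rewrite -subr_eq0 D0.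
  by rewrite AW_eval // -/P EP hornerMX comp_eval // -AW_eval // mulrC.
Qed.
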